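(* Let $G$ be a simple algebraic group over an uncountable algebraically closed field, let $C_1,\dots,C_e$ be noncentral conjugacy classes of $G$ and $\Omega=C_1\times\dots\times C_e$. If there is a tuple $(x_1,\dots,x_e)\in\Omega$ such that $\langle x_1,\dots,x_e\rangle$ is Zariski dense in $G$, then generic tuples in $\Omega$ generate a Zariski dense subgroup of $G$; that is, the set of tuples in $\Omega$ generating a Zariski dense subgroup contains the complement in $\Omega$ of a countable union of proper closed subvarieties of $\Omega$.
   Context: $\Omega$ is an irreducible variety. *)

(* Defs.v *)
From mathcomp Require Import all_boot all_order all_algebra.
Set Implicit Arguments. Unset Strict Implicit. Unset Printing Implicit Defensive.
Import GRing.Theory.
Local Open Scope ring_scope.

Inductive pexpr (I : Type) (k : Type) : Type :=
| PVar of I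
| PConst of k
| PAdd of pexpr I k & pexpr I k
| PMul of pexpr I k & pexpr I k.

Fixpoint peval (I : Type) (k : comRingType) (v : I -> k) (p : pexpr I k) : k :=
  match p with
  | PVar i => v i
  | PConst c => c
  | PAdd p q => peval v p + peval v q
  | PMul p q => peval v p * peval v q
  end.

(* Z is a Zariski-closed subset of X (relative topology), where points of
   type P are given coordinates by coord : P -> (I -> k). *)
Definition zclosed_in (I P : Type) (k : comRingType) (coord : P -> I -> k)
  (X Z : P -> Prop) : Prop :=
  exists S : pexpr I k -> Prop,
    forall x, Z x <-> (X x /\ forall p, S p -> peval (coord x) p = 0).

Definition irreducible_in (I P : Type) (k : comRingType) (coord : P -> I -> k)
  (X : P -> Prop) : Prop :=
  (exists x, X x) /\
  forall Z1 Z2, zclosed_in coord X Z1 -> zclosed_in coord X Z2 ->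
    (forall x, X x -> Z1 x \/ Z2 x) ->
    (forall x, X x -> Z1 x) \/ (forall x, X x -> Z2 x).

Section Groups.
Variables (k : closedFieldType) (n : nat).

Definition mxcoord (A : 'M[k]_n) : 'I_n * 'I_n -> k := fun ij => A ij.1 ij.2.

Definition mclosed_in (X Z : 'M[k]_n -> Prop) := zclosed_in mxcoord X Z.

Definition is_subgroup (H : 'M[k]_n -> Prop) : Prop :=
  (forall A, H A -> A \in unitmx) /\ H 1%:M /\
  (forall A B, H A -> H B -> H (A *m B)) /\ (forall A, H A -> H (invmx A)).

Definition lin_alg_group (G : 'M[k]_n -> Prop) : Prop :=
  is_subgroup G /\ mclosed_in (fun A => A \in unitmx) G.

(* Simple algebraic group: connected (= irreducible), non-abelian, with no
   nontrivial proper closed connected normal subgroup. *)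
Definition simple_alg_group (G : 'M[k]_n -> Prop) : Prop :=
  [/\ lin_alg_group G,
      irreducible_in mxcoord G,
      exists A B, G A /\ G B /\ A *m B <> B *m A &
      forall N : 'M[k]_n -> Prop,
        is_subgroup N -> (forall A, N A -> G A) -> mclosed_in G N ->
        irreducible_in mxcoord N ->
        (forall g A, G g -> N A -> N (invmx g *m A *m g)) ->
        (forall A, N A -> A = 1%:M) \/ (forall A, G A -> N A)].

Definition conj_class (G : 'M[k]_n -> Prop) (x : 'M[k]_n) : 'M[k]_n -> Prop :=
  fun A => exists g, G g /\ A = invmx g *m x *m g.

Definition noncentral (G : 'M[k]_n -> Prop) (x : 'M[k]_n) : Prop :=
  exists g, G g /\ g *m x <> x *m g.

Inductive gen_sub (e : nat) (xs : 'I_e -> 'M[k]_n) : 'M[k]_n -> Prop :=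
| gen_one : gen_sub xs 1%:M
| gen_gen i : gen_sub xs (xs i)
| gen_mul A B : gen_sub xs A -> gen_sub xs B -> gen_sub xs (A *m B)
| gen_inv A : gen_sub xs A -> gen_sub xs (invmx A).

Definition zdense_in (G H : 'M[k]_n -> Prop) : Prop :=
  forall Z, mclosed_in G Z -> (forall A, H A -> Z A) -> forall A, G A -> Z A.

(* Omega = C_1 x ... x C_e, C_i the class of c i; as a subset of (M_n)^e. *)
Definition Omega (e : nat) (G : 'M[k]_n -> Prop) (c : 'I_e -> 'M[k]_n)
  : ('I_e -> 'M[k]_n) -> Prop :=
  fun t => forall i, conj_class G (c i) (t i).

Definition tcoord (e : nat) (t : 'I_e -> 'M[k]_n) : 'I_e * ('I_n * 'I_n) -> k :=
  fun p => t p.1 p.2.1 p.2.2.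

Definition proper_closed_sub (e : nat) (X Z : ('I_e -> 'M[k]_n) -> Prop) : Prop :=
  zclosed_in (@tcoord e) X Z /\ exists t, X t /\ ~ Z t.

End Groups.

Definition uncountable (T : Type) : Prop :=
  forall f : nat -> T, exists x, forall m, f m <> x.

(* Main.v *)
Require Import Defs.
From mathcomp Require Import all_boot all_order all_algebra perm.
From Stdlib Require List Classical ClassicalEpsilon.
Set Implicit Arguments. Unset Strict Implicit. Unset Printing Implicit Defensive.

Section Isp.
Import GRing.Theory.
Local Open Scope ring_scope.
Variables (I P : Type) (k : comRingType) (coord : P -> I -> k) (X : P -> Prop).

Definition isp (f : P -> k) := exists p, forall x, X x -> f x = peval (coord x) p.

Lemma isp_ext f g : isp f -> (forall x, X x -> f x = g x) -> isp g.
Proof. by move=> [p Hp] H; exists p => x Xx; rewrite -H // Hp. Qed.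

Lemma isp_const a : isp (fun _ => a).
Proof. by exists (PConst I a). Qed.

Lemma isp_coord i : isp (fun x => coord x i).
Proof. by exists (PVar k i). Qed.

Lemma isp_add f g : isp f -> isp g -> isp (fun x => f x + g x).
Proof. by move=> [p Hp] [q Hq]; exists (PAdd p q) => x Xx /=; rewrite Hp ?Hq. Qed.

Lemma isp_mul f g : isp f -> isp g -> isp (fun x => f x * g x).
Proof. by move=> [p Hp] [q Hq]; exists (PMul p q) => x Xx /=; rewrite Hp ?Hq. Qed.

Lemma isp_sum (J : Type) (r : seq J) (Q : pred J) (F : J -> P -> k) :
  (forall j, isp (F j)) -> isp (fun x => \sum_(j <- r | Q j) F j x).
Proof.
move=> H; elim: r => [|a r IH].
  by apply: isp_ext (isp_const 0) _ => x _; rewrite big_nil.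
apply: (@isp_ext (fun x => if Q a then F a x + \sum_(j <- r | Q j) F j x
                           else \sum_(j <- r | Q j) F j x)).
  by case: (Q a) => //; apply: isp_add.
by move=> x _; rewrite big_cons.
Qed.

Lemma isp_prod (J : Type) (r : seq J) (Q : pred J) (F : J -> P -> k) :
  (forall j, isp (F j)) -> isp (fun x => \prod_(j <- r | Q j) F j x).
Proof.
move=> H; elim: r => [|a r IH].
  by apply: isp_ext (isp_const 1) _ => x _; rewrite big_nil.
apply: (@isp_ext (fun x => if Q a then F a x * \prod_(j <- r | Q j) F j x
                           else \prod_(j <- r | Q j) F j x)).
  by case: (Q a) => //; apply: isp_mul.
by move=> x _; rewrite big_cons.
Qed.

Lemma isp_det m (B : P -> 'M[k]_m) :
  (forall i j, isp (fun x => B x i j)) -> isp (fun x => \det (B x)).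
Proof.
move=> H; apply: isp_sum => s; apply: isp_mul; first exact: isp_const.
by apply: isp_prod.
Qed.

Lemma closed_of (Q : (P -> k) -> Prop) : (forall q, Q q -> isp q) ->
  zclosed_in coord X (fun x => X x /\ forall q, Q q -> q x = 0).
Proof.
move=> HQ.
exists (fun p => exists q, Q q /\ forall x, X x -> q x = peval (coord x) p).
move=> x; split.
  by case=> Xx H; split=> // p [q [Qq Hq]]; rewrite -Hq // H.
case=> Xx H; split=> // q Qq; case: (HQ q Qq) => p Hp; rewrite Hp //.
by apply: H; exists q.
Qed.

End Isp.

Lemma isp_comp (I J P : Type) (k : comRingType) (coord : P -> I -> k) X
  (g : P -> J -> k) (p : pexpr J k) :
  (forall j, isp coord X (fun x => g x j)) -> isp coord X (fun x => peval (g x) p).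
Proof.
move=> H; elim: p => [j|a|p IHp q IHq|p IHp q IHq] /=.
- exact: H.
- exact: isp_const.
- exact: isp_add.
- exact: isp_mul.
Qed.

Lemma max_ex (Pr : nat -> Prop) B : (exists r, Pr r) -> (forall r, Pr r -> r <= B) ->
  exists r, Pr r /\ forall r', Pr r' -> r' <= r.
Proof.
elim: B => [|B IH] Hex Hb.
  case: Hex => r Hr; exists r; split=> // r' /Hb; rewrite leqn0 => /eqP->.
  by [].
case: (Classical_Prop.classic (Pr B.+1)) => HB.
  by exists B.+1; split=> // r' /Hb.
apply: IH Hex _ => r' Hr'; have := Hb _ Hr'.
rewrite leq_eqVlt => /orP [/eqP E|] //.
by subst.
Qed.


Section Lin.
Import GRing.Theory.
Local Open Scope ring_scope.
Variables (k : closedFieldType) (n : nat).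
Notation M := ('M[k]_n).

Definition F0 : M -> k := fun _ => 0.

Fixpoint Ld (d : nat) : seq (M -> k) :=
  match d with
  | 0 => (fun _ => 1) :: List.map (fun ij B => mxcoord B ij) (enum {: 'I_n * 'I_n})
  | d'.+1 => List.app (Ld d')
      (List.flat_map (fun f => List.map (fun g B => f B * g B) (Ld d')) (Ld d'))
  end.

Inductive combo (L : seq (M -> k)) : (M -> k) -> Prop :=
| combo0 : combo L (fun _ => 0)
| comboS a f g : List.In f L -> combo L g -> combo L (fun B => a * f B + g B)
| comboE f g : combo L f -> (forall B, f B = g B) -> combo L g.

Lemma combo_sub L L' f : (forall g, List.In g L -> List.In g L') -> combo L f -> combo L' f.
Proof.
move=> H; elim=> [|a f1 g Hf _ IH|f1 g _ IH E].
- exact: combo0.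
- by apply: comboS => //; apply: H.
- exact: comboE IH E.
Qed.

Lemma combo_add L f g : combo L f -> combo L g -> combo L (fun B => f B + g B).
Proof.
move=> Hf Hg; elim: Hf => [|a f1 g1 Hf1 _ IH|f1 g1 _ IH E].
- by apply: comboE Hg _ => B; rewrite add0r.
- by apply: comboE (comboS a Hf1 IH) _ => B; rewrite addrA.
- by apply: comboE IH _ => B; rewrite E.
Qed.

Lemma combo_scale L b f : combo L f -> combo L (fun B => b * f B).
Proof.
elim=> [|a f1 g1 Hf1 _ IH|f1 g1 _ IH E].
- by apply: comboE (@combo0 L) _ => B; rewrite mulr0.
- by apply: comboE (comboS (b * a) Hf1 IH) _ => B; rewrite mulrDr mulrA.
- by apply: comboE IH _ => B; rewrite E.
Qed.

Lemma combo_mul1 L L' f1 g :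
  (forall f g, List.In f L -> List.In g L -> List.In (fun B => f B * g B) L') ->
  List.In f1 L -> combo L g -> combo L' (fun B => f1 B * g B).
Proof.
move=> HL Hf1; elim=> [|a f2 g2 Hf2 _ IH|f2 g2 _ IH E].
- by apply: comboE (@combo0 L') _ => B; rewrite mulr0.
- apply: comboE (comboS a (HL _ _ Hf1 Hf2) IH) _ => B.
  by rewrite mulrDr mulrCA.
- by apply: comboE IH _ => B; rewrite E.
Qed.

Lemma combo_mul L L' f g :
  (forall f g, List.In f L -> List.In g L -> List.In (fun B => f B * g B) L') ->
  combo L f -> combo L g -> combo L' (fun B => f B * g B).
Proof.
move=> HL Hf Hg; elim: Hf => [|a f1 g1 Hf1 _ IH|f1 g1 _ IH E].
- by apply: comboE (@combo0 L') _ => B; rewrite mul0r.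
- have H1 := combo_scale a (combo_mul1 HL Hf1 Hg).
  by apply: comboE (combo_add H1 IH) _ => B; rewrite mulrDl mulrA.
- by apply: comboE IH _ => B; rewrite E.
Qed.

Lemma inP_In (T : eqType) (x : T) s : x \in s -> List.In x s.
Proof.
elim: s => //= a s IH; rewrite in_cons => /orP [/eqP->|/IH]; [left|right] => //.
Qed.

Lemma Ld_isp d f : List.In f (Ld d) -> isp (@mxcoord k n) (fun _ => True) f.
Proof.
elim: d f => [|d IH] f /=.
  case=> [<-|]; first exact: isp_const.
  move/List.in_map_iff => [ij [<- _]]; exact: isp_coord.
move/List.in_app_iff => [/IH //|].
move/List.in_flat_map => [f1 [H1 /List.in_map_iff [g [<- H2]]]].
by apply: isp_mul; apply: IH.
Qed.

Lemma Ld_mono d m f : List.In f (Ld d) -> List.In f (Ld (m + d)).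
Proof.
move=> H; elim: m => [|m IH] //=; 
by apply/List.in_app_iff; left.
Qed.

Lemma Ld_mul d f g : List.In f (Ld d) -> List.In g (Ld d) ->
  List.In (fun B => f B * g B) (Ld d.+1).
Proof.
move=> Hf Hg /=; apply/List.in_app_iff; right; apply/List.in_flat_map.
by exists f; split => //; apply/List.in_map_iff; exists g.
Qed.

Lemma pexpr_combo (p : pexpr ('I_n * 'I_n) k) :
  exists d, combo (Ld d) (fun B => peval (mxcoord B) p).
Proof.
elim: p => [ij|a|p [d1 H1] q [d2 H2]|p [d1 H1] q [d2 H2]] /=.
- exists 0; apply: comboE (comboS 1 _ (@combo0 _)) _.
    by right; apply/List.in_map_iff; exists ij; split => //; apply: inP_In; rewrite mem_enum.
  by move=> B; rewrite mul1r addr0.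
- exists 0; apply: comboE (comboS a _ (@combo0 _)) _.
    by left.
  by move=> B; rewrite mulr1 addr0.
- exists (d1 + d2)%N; apply: combo_add.
    by apply: combo_sub H1 => g Hg; rewrite addnC; apply: Ld_mono.
  by apply: combo_sub H2 => g Hg; apply: Ld_mono.
- exists (d1 + d2)%N.+1; apply: (@combo_mul (Ld (d1 + d2)%N)).
  + by move=> f g; apply: Ld_mul.
  + by apply: combo_sub H1 => g Hg; rewrite addnC; apply: Ld_mono.
  + by apply: combo_sub H2 => g Hg; apply: Ld_mono.
Qed.

Definition uv (L : seq (M -> k)) (B : M) : 'rV[k]_(size L) := \row_j nth F0 L j B.
Definition FM (L : seq (M -> k)) m (As : 'I_m -> M) : 'M[k]_(m, size L) :=
  \matrix_(i, j) nth F0 L j (As i).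

Lemma In_nth L f : List.In f L -> exists j : 'I_(size L), nth F0 L j = f.
Proof.
elim: L => //= a L IH [->|/IH [j Hj]].
  by exists ord0.
by exists (@Ordinal (size L).+1 j.+1 (ltn_ord j)).
Qed.

Lemma nth_In L (j : 'I_(size L)) : List.In (nth F0 L j) L.
Proof.
case: j => j; elim: L j => //= a L IH [|j] Hj; first by left.
by right; apply: IH.
Qed.

Lemma combo_vec L f : combo L f ->
  exists c : 'cV[k]_(size L), forall B, f B = (uv L B *m c) 0 0.
Proof.
elim=> [|a f1 g Hf _ [c Hc]|f1 g _ [c Hc] E].
- by exists 0 => B; rewrite mulmx0 mxE.
- case: (In_nth Hf) => j Hj.
  exists (a *: delta_mx j 0 + c) => B.
  rewrite mulmxDr -scalemxAr -colE [in RHS]mxE -Hc; congr (_ + _).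
  by rewrite mxE mxE mxE Hj.
- by exists c => B; rewrite -E Hc.
Qed.

Lemma vec_isp L m (c : 'M[k]_(size L, m)) (j : 'I_m) :
  (forall f, List.In f L -> isp (@mxcoord k n) (fun _ => True) f) ->
  isp (@mxcoord k n) (fun _ => True) (fun B => (uv L B *m c) 0 j).
Proof.
move=> H.
apply: (@isp_ext _ _ _ _ _ (fun B => \sum_(i <- index_enum 'I_(size L) | true) nth F0 L i B * c i j)).
  apply: isp_sum => i; apply: isp_mul; last exact: isp_const.
  exact/H/nth_In.
by move=> B _; rewrite mxE; apply: eq_bigr => i _; rewrite mxE.
Qed.

End Lin.


Section Rank.
Import GRing.Theory.
Local Open Scope ring_scope.
Variables (k : closedFieldType) (n : nat).
Notation M := ('M[k]_n).

Definition fam (T : M -> Prop) m (As : 'I_m -> M) := forall i, T (As i).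

Definition maxrank (T : M -> Prop) (L : seq (M -> k)) (r : nat) :=
  (exists m (As : 'I_m -> M), fam T As /\ \rank (FM L As) = r) /\
  (forall m (As : 'I_m -> M), fam T As -> (\rank (FM L As) <= r)%N).

Lemma ex_maxrank T L : exists r, maxrank T L r.
Proof.
pose Pr r := exists m (As : 'I_m -> M), fam T As /\ \rank (FM L As) = r.
have H0 : exists r, Pr r.
  exists 0%N, 0%N, (fun i : 'I_0 => 0); split; first by case.
  by apply/eqP; rewrite -leqn0 rank_leq_row.
have Hb : forall r, Pr r -> (r <= size L)%N.
  by move=> r [m [As [_ <-]]]; apply: rank_leq_col.
have [r [[m [As [HA <-]]] Hmax]] := max_ex H0 Hb.
exists (\rank (FM L As)); split; first by exists m, As.
by move=> m' As' HA'; apply: Hmax; exists m', As'.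
Qed.

Lemma maxrank_sub T L r m (As : 'I_m -> M) A : maxrank T L r -> fam T As ->
  \rank (FM L As) = r -> T A -> (uv L A <= FM L As)%MS.
Proof.
move=> [_ Hmax] HAs Hr TA.
pose As' : 'I_(m + 1) -> M := fun i => match split i with inl i' => As i' | inr _ => A end.
have HAs' : fam T As' by move=> i; rewrite /As'; case: (split i).
have E : FM L As' = col_mx (FM L As) (uv L A).
  apply/matrixP => i j; rewrite !mxE /As'; case: (split i) => i'; rewrite !mxE //.
have S : (FM L As <= col_mx (FM L As) (uv L A))%MS by rewrite -addsmxE addsmxSl.
have := mxrank_leqif_sup S; move/geq_leqif.
have := Hmax _ _ HAs'; rewrite E Hr => -> /esym.
by rewrite col_mx_sub => /andP [].
Qed.

Lemma minor_nz m D r (W : 'M[k]_(m, D)) : \rank W = r ->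
  exists (g : 'I_r -> 'I_m) (f : 'I_r -> 'I_D),
    \det (\matrix_(i, j) W (g i) (f j)) != 0.
Proof.
move=> <-.
have Hg := maxrowsub_free W.
set g := maxrankfun W in Hg *.
set B := rowsub g W in Hg *.
have E : \rank B^T = \rank W by rewrite mxrank_tr; exact/eqP.
have Hf := maxrowsub_free B^T.
move: (maxrankfun B^T) Hf; rewrite E => f Hf.
exists g, f.
rewrite row_free_unit unitmxE unitfE -det_tr in Hf.
suff -> : \matrix_(i, j) W (g i) (f j) = (rowsub f B^T)^T by [].
by apply/matrixP => i j; rewrite !mxE.
Qed.

End Rank.


Inductive word (e : nat) : Type :=
| WOne | WGen of 'I_e | WMul of word e & word e | WInv of word e.

Section Words.
Import GRing.Theory.
Local Open Scope ring_scope.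
Variables (k : closedFieldType) (n e : nat).
Notation M := ('M[k]_n).

Fixpoint weval (w : word e) (x : 'I_e -> M) : M :=
  match w with
  | WOne => 1%:M
  | WGen i => x i
  | WMul a b => weval a x *m weval b x
  | WInv a => invmx (weval a x)
  end.

Lemma weval_gen w x : gen_sub x (weval w x).
Proof. elim: w => /= [|i|a Ha b Hb|a Ha]; by constructor. Qed.

Lemma gen_weval x A : gen_sub x A -> exists w, A = weval w x.
Proof.
elim=> [|i|B C _ [b ->] _ [c ->]|B _ [b ->]].
- by exists (WOne e).
- by exists (WGen i).
- by exists (WMul b c).
- by exists (WInv b).
Qed.

Variables (G : M -> Prop) (c : 'I_e -> M).
Hypothesis (Hsub : is_subgroup G) (Hc : forall i, G (c i)).

Lemma gen_sub_G x A : Omega G c x -> gen_sub x A -> G A.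
Proof.
case: Hsub => [Hu [H1 [HM HI]]] Hx.
elim=> [|i|B C _ HB _ HC|B _ HB].
- exact: H1.
- by case: (Hx i) => g [Gg ->]; apply: (HM _ _ (HM _ _ (HI _ Gg) (Hc i)) Gg).
- exact: HM.
- exact: HI.
Qed.

Fixpoint dval (w : word e) : k :=
  match w with
  | WOne => 1
  | WGen i => \det (c i)
  | WMul a b => dval a * dval b
  | WInv a => (dval a)^-1
  end.

Lemma weval_det x w : Omega G c x -> \det (weval w x) = dval w.
Proof.
move=> Hx; case: (Hsub) => [Hu _].
elim: w => /= [|i|a Ha b Hb|a Ha].
- by rewrite det1.
- case: (Hx i) => g [Gg ->].
  have Ug := Hu _ Gg; rewrite unitmxE in Ug.
  rewrite !det_mulmx det_inv mulrC mulrA mulrV ?mul1r //.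
- by rewrite det_mulmx Ha Hb.
- by rewrite det_inv Ha.
Qed.

Lemma weval_isp w i j : isp (@tcoord k n e) (Omega G c) (fun x => weval w x i j).
Proof.
elim: w i j => /= [|l|a Ha b Hb|a Ha] i j.
- by apply: isp_ext (isp_const _ _ ((i == j)%:R)) _ => x _; rewrite mxE.
- exact: (isp_coord _ _ (l, (i, j))).
- apply: (@isp_ext _ _ _ _ _ (fun x => \sum_(l <- index_enum 'I_n | true) weval a x i l * weval b x l j)).
    by apply: isp_sum => l; apply: isp_mul.
  by move=> x _; rewrite mxE.
- pose f := (fun x => (dval a)^-1 *
     \sum_(s <- index_enum {perm 'I_n} | perm.fun_of_perm s j == i)
        ((-1) ^+ perm.odd_perm s * \prod_(l <- index_enum 'I_n | j != l) weval a x l (perm.fun_of_perm s l))).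
  have Hf : isp (@tcoord k n e) (Omega G c) f.
    apply: isp_mul; first exact: isp_const.
    apply: isp_sum => s; apply: isp_mul; first exact: isp_const.
    by apply: isp_prod => l; apply: Ha.
  apply: (isp_ext Hf).
  move=> x Hx.
  have Ua : weval a x \in unitmx by case: Hsub => Hu _; apply: Hu; apply: (gen_sub_G Hx (weval_gen a x)).
  rewrite /invmx Ua mxE mxE weval_det // expand_cofactor //.
Qed.

End Words.


Section Main.
Import GRing.Theory.
Local Open Scope ring_scope.

Definition Qd (k : closedFieldType) (n e : nat) (G : 'M[k]_n -> Prop) (d : nat)
  (q : ('I_e -> 'M[k]_n) -> k) : Prop :=
  exists r, maxrank G (@Ld k n d) r /\
  exists (ws : 'I_r -> word e) (f : 'I_r -> 'I_(size (@Ld k n d))),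
    q = fun x => \det (\matrix_(i, j) nth (@F0 k n) (@Ld k n d) (f j) (weval (ws i) x)).

Lemma main_thm (k : closedFieldType) (n e : nat)
  (G : 'M[k]_n -> Prop) (c : 'I_e -> 'M[k]_n) :
  simple_alg_group G ->
  (forall i, G (c i)) ->
  (exists x, Omega G c x /\ zdense_in G (gen_sub x)) ->
  exists Z : nat -> ('I_e -> 'M[k]_n) -> Prop,
    (forall j, proper_closed_sub (Omega G c) (Z j)) /\
    (forall x, Omega G c x -> (forall j, ~ Z j x) -> zdense_in G (gen_sub x)).
Proof.
move=> [[Hsub _] _ _ _] Hc [x0 [Hx0 Hdense]].
exists (fun d x => Omega G c x /\ forall q, Qd G d q -> q x = 0).
split.
- move=> d; split.
    apply: closed_of => q [r [_ [ws [f ->]]]].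
    apply: isp_det => i j.
    have [p Hp] := Ld_isp (nth_In (f j)).
    apply: (@isp_ext _ _ _ _ _ (fun x => peval (mxcoord (weval (ws i) x)) p)).
      by apply: isp_comp => ij; apply: weval_isp.
    by move=> x _; rewrite mxE -Hp.
  exists x0; split => //; case=> _ HZ.
  set L := @Ld k n d.
  have [r Hr] := ex_maxrank G L.
  have [[m0 [As0 [HA0 Hr0]]] Hmax] := Hr.
  have [r' Hr'] := ex_maxrank (gen_sub x0) L.
  have [[m1 [Ws [HW HrW]]] _] := Hr'.
  have S : (FM L As0 <= FM L Ws)%MS.
    apply/row_subP => i.
    have -> : row i (FM L As0) = uv L (As0 i) by apply/matrixP => a b; rewrite !mxE.
    apply: contraT; rewrite submxE => Hn.
    set V := uv L (As0 i) *m cokermx (FM L Ws) in Hn *.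
    have [j Hj] : exists j, V 0 j <> 0.
      apply: Classical_Pred_Type.not_all_ex_not => Hno; move/negP: Hn; apply.
      by apply/eqP/matrixP => a b; rewrite ord1 [RHS]mxE; apply: Hno.
    pose p := fun B => (uv L B *m cokermx (FM L Ws)) 0 j.
    have [pp Hpp] := vec_isp (cokermx (FM L Ws)) j (fun f Hf => Ld_isp Hf).
    have Zc : mclosed_in G (fun B => G B /\ p B = 0).
      exists (fun q => q = pp) => B; split.
        by case=> GB HB; split=> // q ->; rewrite -Hpp.
      by case=> GB H; split=> //; rewrite /p Hpp // H.
    have Hgen : forall B, gen_sub x0 B -> G B /\ p B = 0.
      move=> B HB; split; first exact: (gen_sub_G Hsub Hc Hx0 HB).
      have /submxP [D HD] := maxrank_sub Hr' HW HrW HB.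
      by rewrite /p HD -mulmxA mulmx_coker mulmx0 mxE.
    have [_ H0] := Hdense _ Zc Hgen (As0 i) (HA0 i).
    by case: (Hj H0).
  have E1 : \rank (FM L Ws) = r.
    apply/eqP; rewrite eqn_leq; apply/andP; split.
      by apply: Hmax => i; exact: (gen_sub_G Hsub Hc Hx0 (HW i)).
    by rewrite -Hr0; apply: mxrankS.
  have [g [f Hdet]] := minor_nz E1.
  pose ws := fun i => proj1_sig (ClassicalEpsilon.constructive_indefinite_description _ (gen_weval (HW (g i)))).
  have Hws : forall i, Ws (g i) = weval (ws i) x0.
    by move=> i; exact: (proj2_sig (ClassicalEpsilon.constructive_indefinite_description _ (gen_weval (HW (g i))))).
  have H0 := HZ (fun x => \det (\matrix_(i, j) nth (@F0 k n) L (f j) (weval (ws i) x))).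
  move/eqP: Hdet; apply; rewrite -H0.
    by congr (\det _); apply/matrixP => a b; rewrite !mxE Hws.
  by exists r; split => //; exists ws, f.
- move=> x Hx HZ Zc [S HS] Hsubz A GA.
  apply/HS; split => // p Sp.
  have [d Hd] := pexpr_combo p.
  have [cv Hcv] := combo_vec Hd.
  set L := @Ld k n d in Hcv.
  have := HZ d.
  move/Classical_Prop.not_and_or; case=> [H|H]; first by case: (H Hx).
  have [q Hq0] := Classical_Pred_Type.not_all_ex_not _ _ H.
  have [[r [Hr [ws [f Eq]]]] Hq] := Classical_Prop.imply_to_and _ _ Hq0.
  subst q.
  pose Mx := FM L (fun i => weval (ws i) x).
  have famMx : fam G (fun i => weval (ws i) x) := fun i => gen_sub_G Hsub Hc Hx (weval_gen _ _).
  have Er : \rank Mx = r.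
    apply/eqP; rewrite eqn_leq; apply/andP; split; first by case: Hr => _; apply.
    set Qm := \matrix_(i, j) _ in Hq.
    have : Qm \in unitmx by rewrite unitmxE unitfE; apply/eqP.
    rewrite -row_free_unit => /eqP E.
    apply: (@leq_trans (\rank Qm)); first by rewrite E.
    rewrite -mxrank_tr -(mxrank_tr Mx).
    have -> : Qm^T = rowsub f Mx^T by apply/matrixP => a b; rewrite !mxE.
    exact: mxrankS (rowsub_sub _ _).
  have /submxP [Dm HDm] := maxrank_sub Hr famMx Er GA.
  have Z0 : Mx *m cv = 0.
    apply/matrixP => a b; rewrite ord1 [RHS]mxE.
    have /HS [_ /(_ p Sp)] := Hsubz _ (weval_gen (ws a) x).
    rewrite Hcv => Hz; rewrite -Hz !mxE; apply: eq_bigr => l _; rewrite !mxE.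
    by [].
  by rewrite Hcv HDm -mulmxA Z0 mulmx0 mxE.
Qed.
End Main.


Unset Implicit Arguments.

Theorem lemma2p7 (k : closedFieldType) (n e : nat)
  (G : 'M[k]_n -> Prop) (c : 'I_e -> 'M[k]_n) :
  uncountable k ->
  simple_alg_group G ->
  (forall i, G (c i)) ->
  (forall i, noncentral G (c i)) ->
  (exists x, Omega G c x /\ zdense_in G (gen_sub x)) ->
  exists Z : nat -> ('I_e -> 'M[k]_n) -> Prop,
    (forall j, proper_closed_sub (Omega G c) (Z j)) /\
    (forall x, Omega G c x -> (forall j, ~ Z j x) -> zdense_in G (gen_sub x)).
Proof.
move=> _ Hs Hc _ Hx.
exact: main_thm Hs Hc Hx.
Qed.
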